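(* Let $(A,B,R)$ be a normalized formal context with $A$ and $B$ finite, and let $\{(X_i^*,Y_i^* )\mid i\in I\}$ be the set of all join-irreducible elements of $(\mathcal{C}_N,\leq)$. Then $\{X_i^*\mid i\in I\}$ is a partition of $B$ and $\{Y_i^*\mid i\in I\}$ is a partition of $A$.
   Context: A formal context is a triple $(A,B,R)$ with $R\subseteq A\times B$. The necessity operators are $X^{\uparrow_N}=\{a\in A\mid \text{for all } b\in B,\ (a,b)\in R\Rightarrow b\in X\}$ for $X\subseteq B$, and $Y^{\downarrow^N}=\{b\in B\mid \text{for all } a\in A,\ (a,b)\in R\Rightarrow a\in Y\}$ for $Y\subseteq A$. $\mathcal{C}_N=\{(X,Y)\mid X\subseteq B,\ Y\subseteq A,\ X^{\uparrow_N}=Y,\ Y^{\downarrow^N}=X\}$, ordered by $(X_1,Y_1)\leq(X_2,Y_2)$ iff $X_1\subseteq X_2$ (equivalently $Y_1\subseteq Y_2$); it is a complete lattice with join $(X_1\cup X_2,Y_1\cup Y_2)$, meet $(X_1\cap X_2,Y_1\cap Y_2)$, bottom $(\varnothing,\varnothing)$ and top $(B,A)$. The context is normalized if for every $a\in A$ there are $b,b'\in B$ with $(a,b)\in R$, $(a,b')\notin R$, and for every $b\in B$ there are $a,a'\in A$ with $(a,b)\in R$, $(a',b)\notin R$. An element $x$ of a lattice is join-irreducible if $x$ is not the bottom element and $x=y\vee z$ implies $x=y$ or $x=z$. *)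

(* Defs.v *)
From mathcomp Require Import all_boot.
Set Implicit Arguments. Unset Strict Implicit. Unset Printing Implicit Defensive.

Section Context.
Variables (A B : finType) (R : A -> B -> bool).

Definition upN (X : {set B}) : {set A} :=
  [set a | [forall b, R a b ==> (b \in X)]].

Definition downN (Y : {set A}) : {set B} :=
  [set b | [forall a, R a b ==> (a \in Y)]].

Definition inCN (p : {set B} * {set A}) : bool :=
  (upN p.1 == p.2) && (downN p.2 == p.1).

Definition normalized : Prop :=
  (forall a : A, (exists b, R a b) /\ (exists b', ~~ R a b')) /\
  (forall b : B, (exists a, R a b) /\ (exists a', ~~ R a' b)).

(* join-irreducible elements of (C_N, <=): in C_N, not the bottom (set0, set0),
   and x = y \/ z (join in C_N = componentwise union) implies x = y or x = z. *)
Definition join_irreducibleN (p : {set B} * {set A}) : bool :=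
  [&& inCN p, p != (set0, set0) &
   [forall q : {set B} * {set A}, forall r : {set B} * {set A},
     [&& inCN q, inCN r & p == (q.1 :|: r.1, q.2 :|: r.2)] ==> ((p == q) || (p == r))]].

Definition JIset : {set {set B} * {set A}} := [set p | join_irreducibleN p].
End Context.

(* Main.v *)
Require Import Defs.
From mathcomp Require Import all_boot.
Set Implicit Arguments. Unset Strict Implicit. Unset Printing Implicit Defensive.

Section S.
Variables (A B : finType) (R : A -> B -> bool).
Hypothesis HN : normalized R.
Notation P := ({set B} * {set A})%type.

Definition closed (p : P) := forall a b, R a b -> (a \in p.2) = (b \in p.1).

Lemma inCN_closed p : inCN R p -> closed p.
Proof.
case: p => X Y /andP[/= /eqP eU /eqP eD] a b Rab /=.
apply/idP/idP.
- rewrite -eU inE => /forallP/(_ b)/implyP; apply; exact Rab.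
- rewrite -eD inE => /forallP/(_ a)/implyP; apply; exact Rab.
Qed.

Lemma closed_inCN p : closed p -> inCN R p.
Proof.
case: p => X Y /= cl; apply/andP; split; apply/eqP/setP => x; rewrite inE /=.
- apply/forallP/idP.
  + move=> h. case: (proj1 HN x) => [[b Rb] _]. rewrite (cl _ _ Rb).
    exact: (implyP (h b) Rb).
  + move=> hx b; apply/implyP => Rb; rewrite -(cl _ _ Rb); exact hx.
- apply/forallP/idP.
  + move=> h. case: (proj2 HN x) => [[a Ra] _]. rewrite -(cl _ _ Ra).
    exact: (implyP (h a) Ra).
  + move=> hx a; apply/implyP => Ra; rewrite (cl _ _ Ra); exact hx.
Qed.

Definition memv (v : B + A) (p : P) : bool :=
  match v with inl b => b \in p.1 | inr a => a \in p.2 end.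

Definition comp v : P :=
  (\bigcap_(q : P | inCN R q && memv v q) q.1,
   \bigcap_(q : P | inCN R q && memv v q) q.2).

Lemma comp_closed v : closed (comp v).
Proof.
move=> a b Rab /=. apply/bigcapP/bigcapP => h q /andP[hq hm].
- rewrite -(inCN_closed hq Rab). apply: h; by rewrite hq hm.
- rewrite (inCN_closed hq Rab). apply: h; by rewrite hq hm.
Qed.

Lemma mem_comp v : memv v (comp v).
Proof. case: v => x /=; apply/bigcapP => q /andP[_]; done. Qed.

Lemma comp_min v q : inCN R q -> memv v q ->
  (comp v).1 \subset q.1 /\ (comp v).2 \subset q.2.
Proof. move=> hq hm; split; apply: bigcap_inf; by rewrite hq hm. Qed.

Lemma memv0 v : memv v (set0, set0) = false.
Proof. by case: v => x /=; rewrite inE. Qed.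

Lemma memvU v q r : memv v (q.1 :|: r.1, q.2 :|: r.2) = memv v q || memv v r.
Proof. by case: v => x /=; rewrite inE. Qed.

Lemma comp_JI v : comp v \in JIset R.
Proof.
rewrite inE /join_irreducibleN. apply/and3P; split.
- apply: closed_inCN; apply: comp_closed.
- apply/eqP => e. have := mem_comp v; by rewrite e memv0.
- apply/forallP => q; apply/forallP => r; apply/implyP => /and3P[hq hr /eqP e].
  have hm := mem_comp v.
  have [hv|hv] : memv v q \/ memv v r.
    by apply/orP; move: hm; rewrite e memvU.
  + case: (comp_min hq hv) => s1 s2. rewrite {}e in s1 s2 *.
    apply/orP; left. case: q {hq hv} s1 s2 => q1 q2 /= s1 s2.
    by rewrite xpair_eqE !eqEsubset s1 s2 !subsetUl.
  + case: (comp_min hr hv) => s1 s2. rewrite {}e in s1 s2 *.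
    apply/orP; right. case: r {hr hv} s1 s2 => r1 r2 /= s1 s2.
    by rewrite xpair_eqE !eqEsubset s1 s2 !subsetUr.
Qed.

Lemma JI_inCN p : p \in JIset R -> inCN R p.
Proof. by rewrite inE => /and3P[]. Qed.

Lemma JI_split p q r : p \in JIset R -> inCN R q -> inCN R r ->
  p = (q.1 :|: r.1, q.2 :|: r.2) -> p = q \/ p = r.
Proof.
rewrite inE => /and3P[_ _ /forallP/(_ q)/forallP/(_ r)/implyP h] hq hr e.
have := h; rewrite hq hr e eqxx => /(_ isT) /orP[/eqP->|/eqP->]; by [left|right].
Qed.

Lemma closedI p q : closed p -> closed q -> closed (p.1 :&: q.1, p.2 :&: q.2).
Proof. move=> hp hq a b Rab /=; by rewrite !inE (hp _ _ Rab) (hq _ _ Rab). Qed.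

Lemma closedD p q : closed p -> closed q -> closed (p.1 :\: q.1, p.2 :\: q.2).
Proof. move=> hp hq a b Rab /=; by rewrite !inE (hp _ _ Rab) (hq _ _ Rab). Qed.

Lemma JI_sub p p' v : p \in JIset R -> p' \in JIset R -> memv v p -> memv v p' ->
  p.1 \subset p'.1 /\ p.2 \subset p'.2.
Proof.
move=> hp hp' hv hv'.
have cp := inCN_closed (JI_inCN hp). have cp' := inCN_closed (JI_inCN hp').
have := JI_split hp (closed_inCN (closedI cp cp')) (closed_inCN (closedD cp cp')).
case: p hp cp hv => p1 p2 hp cp hv /=. rewrite !setID => /(_ erefl).
case=> [[e1 e2]|[e1 e2]].
- by split; [rewrite e1 subsetIr | rewrite e2 subsetIr].
- case: v hv hv' => x /= hv hv'.
  + by move: hv; rewrite e1 inE hv'.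
  + by move: hv; rewrite e2 inE hv'.
Qed.

Lemma JI_uniq p p' v : p \in JIset R -> p' \in JIset R -> memv v p -> memv v p' ->
  p = p'.
Proof.
move=> hp hp' hv hv'.
case: (JI_sub hp hp' hv hv') => s1 s2. case: (JI_sub hp' hp hv' hv) => t1 t2.
case: p {hp hv} s1 s2 t1 t2 => p1 p2; case: p' {hp' hv'} => q1 q2 /= s1 s2 t1 t2.
apply/eqP; by rewrite xpair_eqE !eqEsubset s1 s2 t1 t2.
Qed.

Lemma JI_ne p : p \in JIset R -> p.1 != set0 /\ p.2 != set0.
Proof.
move=> hp. have cp := inCN_closed (JI_inCN hp).
move: hp; rewrite inE => /and3P[_ ne _].
case: p cp ne => X Y /= cp ne; split; apply/negP => /eqP e0.
- suff e : Y = set0 by move: ne; rewrite e0 e eqxx.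
  apply/setP => a; rewrite in_set0; case: (proj1 HN a) => [[b Rb] _].
  by rewrite (cp _ _ Rb) e0 in_set0.
- suff e : X = set0 by move: ne; rewrite e0 e eqxx.
  apply/setP => b; rewrite in_set0; case: (proj2 HN b) => [[a Ra] _].
  by rewrite -(cp _ _ Ra) e0 in_set0.
Qed.

End S.

Theorem mainTheorem3 (A B : finType) (R : A -> B -> bool) :
  normalized R ->
  partition [set p.1 | p in JIset R] [set: B] /\
  partition [set p.2 | p in JIset R] [set: A].
Proof.
move=> HN; split; apply/and3P; split.
- apply/eqP/setP => b; rewrite in_setT; apply/bigcupP.
  exists (comp R (inl b)).1; [apply: imset_f; exact: comp_JI HN _ | by have := @mem_comp _ _ R (inl b)].
- apply/trivIsetP => X Y /imsetP[p hp ->] /imsetP[p' hp' ->] ne.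
  rewrite -setI_eq0; apply/eqP/setP => b; rewrite !inE; apply/negbTE/negP => /andP[h1 h2].
  by move: ne; rewrite (JI_uniq HN hp hp' (v:=inl b) h1 h2) eqxx.
- apply/imsetP => [[p hp e]]. have := (JI_ne HN hp).1; by rewrite -e eqxx.
- apply/eqP/setP => a; rewrite in_setT; apply/bigcupP.
  exists (comp R (inr a)).2; [apply: imset_f; exact: comp_JI HN _ | by have := @mem_comp _ _ R (inr a)].
- apply/trivIsetP => X Y /imsetP[p hp ->] /imsetP[p' hp' ->] ne.
  rewrite -setI_eq0; apply/eqP/setP => a; rewrite !inE; apply/negbTE/negP => /andP[h1 h2].
  by move: ne; rewrite (JI_uniq HN hp hp' (v:=inr a) h1 h2) eqxx.
- apply/imsetP => [[p hp e]]. have := (JI_ne HN hp).2; by rewrite -e eqxx.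
Qed.
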